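(* In the setting of the context, the involute $N$ (the closed polygonal curve formed by the segments $N_{i-\frac12}N_{i+\frac12}$), together with the region $\overline N$ bounded by it, is contained in the region $\overline M$ bounded by the central equidistant $M$.
   Context: $[x,y]$ denotes the determinant of the matrix with columns $x,y\in\mathbb{R}^2$. Fix $n\ge2$; indices (integer and half-integer) are read modulo $2n$. $U$ is a convex $2n$-gon with distinct vertices $U_1,\dots,U_{2n}$ in counterclockwise order with $U_{i+n}=-U_i$, and $V_{i+\frac12}=(U_{i+1}-U_i)/[U_i,U_{i+1}]$. Let $c>0$ and let $P$ be a convex polygon with nonempty interior and vertex list $P_1,\dots,P_{2n}$ (listed counterclockwise, consecutive entries may coincide) with $P_{i+1}-P_i$ a nonnegative multiple of $V_{i+\frac12}$ and $P_i-P_{i+n}=2cU_i$ for all $i$. The central equidistant $M$ is the closed polygonal curve with vertices $M_i=\frac12(P_i+P_{i+n})$; define $\alpha_{i+\frac12}$ by $M_{i+1}-M_i=\alpha_{i+\frac12}(U_{i+1}-U_i)$, $\beta_i=\frac12\sum_{j=i}^{i+n-1}\alpha_{j+\frac12}[U_j,U_{j+1}]$, and the involute $N_{i+\frac12}=M_i+\beta_iV_{i+\frac12}$. For a closed polygonal curve $X$, its exterior is the set of points of the plane that can be joined to a point of (the boundary curve of) $P$ by a continuous path not meeting $X$, and the region $\overline X$ bounded by $X$ is the complement of the exterior. *)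

(* Defs.v *)
From Stdlib Require Import Reals Lra Arith.
Open Scope R_scope.

Definition pt := (R * R)%type.
Definition padd (p q : pt) : pt := (fst p + fst q, snd p + snd q).
Definition psub (p q : pt) : pt := (fst p - fst q, snd p - snd q).
Definition pscale (a : R) (p : pt) : pt := (a * fst p, a * snd p).
(* [x,y] : determinant of the matrix with columns x, y *)
Definition det (p q : pt) : R := fst p * snd q - snd p * fst q.

Definition segment (a b : pt) (x : pt) : Prop :=
  exists t, 0 <= t <= 1 /\ x = padd (pscale (1 - t) a) (pscale t b).

(* closed polygonal curve with vertices X 0, ..., X (m-1) (X periodic of period m):
   union of the segments [X i, X (i+1)], i < m *)
Definition polycurve (m : nat) (X : nat -> pt) (x : pt) : Prop :=
  exists i, (i < m)%nat /\ segment (X i) (X (S i)) x.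

(* continuous path in the plane (parametrised on R; only [0,1] matters) *)
Definition is_path (g : R -> pt) : Prop :=
  continuity (fun t => fst (g t)) /\ continuity (fun t => snd (g t)).

(* exterior of the curve X relative to the reference curve B (boundary of P):
   points joinable to a point of B by a continuous path not meeting X *)
Definition exterior (X B : pt -> Prop) (x : pt) : Prop :=
  exists g : R -> pt, is_path g /\ g 0 = x /\ B (g 1) /\
    (forall t, 0 <= t <= 1 -> ~ X (g t)).

Definition region (X B : pt -> Prop) (x : pt) : Prop := ~ exterior X B x.

(* Index conventions: all sequences are indexed by nat and 2n-periodic.
   V i stands for V_{i+1/2}, alpha i for alpha_{i+1/2}, Npt i for N_{i+1/2}. *)
Definition Vdir (U : nat -> pt) (i : nat) : pt :=
  pscale (/ det (U i) (U (S i))) (psub (U (S i)) (U i)).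

Definition Mpt (n : nat) (P : nat -> pt) (i : nat) : pt :=
  pscale (1 / 2) (padd (P i) (P (i + n)%nat)).

Fixpoint rsum (f : nat -> R) (k : nat) : R :=
  match k with O => 0 | S k' => rsum f k' + f k' end.

Definition beta (n : nat) (U : nat -> pt) (alpha : nat -> R) (i : nat) : R :=
  / 2 * rsum (fun k => alpha (i + k)%nat * det (U (i + k)%nat) (U (S (i + k)))) n.

Definition Npt (n : nat) (U P : nat -> pt) (alpha : nat -> R) (i : nat) : pt :=
  padd (Mpt n P i) (pscale (beta n U alpha i) (Vdir U i)).

(* Main.v *)
Require Import Defs.
From Stdlib Require Import Reals Lra Lia Arith Psatz.
Open Scope R_scope.

Lemma rsum_ext f g m : (forall k, (k < m)%nat -> f k = g k) -> rsum f m = rsum g m.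
Proof. induction m; simpl; intros H; auto. rewrite IHm by (intros; apply H; lia). rewrite H by lia. auto. Qed.

Lemma rsum_plus f g m : rsum (fun k => f k + g k) m = rsum f m + rsum g m.
Proof. induction m; simpl; [lra|]. rewrite IHm; lra. Qed.

Lemma rsum_shift1 f m : rsum f (S m) = f 0%nat + rsum (fun k => f (S k)) m.
Proof. induction m. simpl; lra. change (rsum f (S (S m))) with (rsum f (S m) + f (S m)). rewrite IHm. simpl. lra. Qed.

Lemma rsum_split f a b : rsum f (a + b) = rsum f a + rsum (fun k => f (a + k)%nat) b.
Proof. induction b; simpl. rewrite Nat.add_0_r; lra. rewrite Nat.add_succ_r. simpl. rewrite IHb. lra. Qed.

Lemma rsum_rot1 f N : (forall k, f (k + N)%nat = f k) -> rsum (fun k => f (S k)) N = rsum f N.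
Proof. intros H. assert (E := rsum_shift1 f N). simpl in E. specialize (H 0%nat). simpl in H. lra. Qed.

Lemma rsum_rot f N : (forall k, f (k + N)%nat = f k) -> forall p, rsum (fun k => f (p + k)%nat) N = rsum f N.
Proof. intros H p. induction p. simpl. reflexivity.
  rewrite <- IHp. rewrite <- (rsum_rot1 (fun k => f (p + k)%nat)).
  apply rsum_ext. intros k _. cbv beta. f_equal; lia. intros k. cbv beta. rewrite <- (H (p + k)%nat). f_equal; lia. Qed.

Lemma rsum_le f g m : (forall k, (k < m)%nat -> f k <= g k) -> rsum f m <= rsum g m.
Proof. induction m; simpl; intros H. lra. assert (H1 := H m (Nat.lt_succ_diag_r m)). assert (rsum f m <= rsum g m) by (apply IHm; intros; apply H; lia). lra. Qed.

Lemma rsum_const c m : rsum (fun _ => c) m = INR m * c.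
Proof. induction m. simpl; lra. rewrite S_INR. simpl. rewrite IHm. lra. Qed.

Lemma rsum_nonneg f m : (forall k, (k < m)%nat -> 0 <= f k) -> 0 <= rsum f m.
Proof. intros H. replace 0 with (rsum (fun _ => 0) m). apply rsum_le; auto. rewrite rsum_const; lra. Qed.

Lemma rsum_ge_term f m k : (forall k, (k < m)%nat -> 0 <= f k) -> (k < m)%nat -> f k <= rsum f m.
Proof. induction m; intros H Hk. lia. simpl. destruct (Nat.eq_dec k m). subst.
  assert (0 <= rsum f m) by (apply rsum_nonneg; intros; apply H; lia). lra.
  assert (f k <= rsum f m) by (apply IHm; [intros; apply H; lia | lia]). assert (0 <= f m) by (apply H; lia). lra. Qed.

Lemma per_mult {A} (f : nat -> A) N : (forall k, f (k + N)%nat = f k) -> forall q r, f (q * N + r)%nat = f r.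
Proof. intros H q r. induction q. simpl. auto. rewrite <- IHq. rewrite <- (H (q * N + r)%nat). f_equal. simpl. lia. Qed.

Lemma per_mod {A} (f : nat -> A) N : (N > 0)%nat -> (forall k, f (k + N)%nat = f k) -> forall k, f k = f (k mod N).
Proof. intros HN H k. rewrite (Nat.div_mod_eq k N) at 1. rewrite Nat.mul_comm. apply per_mult; auto. Qed.

Definition sg (r : R) : R := if Rlt_dec 0 r then 1 else if Rlt_dec r 0 then -1 else 0.
Lemma sg_pos r : 0 < r -> sg r = 1. Proof. unfold sg; intros; destruct (Rlt_dec 0 r); lra. Qed.
Lemma sg_neg r : r < 0 -> sg r = -1. Proof. unfold sg; intros; destruct (Rlt_dec 0 r); try lra; destruct (Rlt_dec r 0); lra. Qed.
Lemma sg_zero r : r = 0 -> sg r = 0. Proof. unfold sg; intros; destruct (Rlt_dec 0 r); try lra; destruct (Rlt_dec r 0); lra. Qed.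
Lemma sg_cases r : (0 < r /\ sg r = 1) \/ (r < 0 /\ sg r = -1) \/ (r = 0 /\ sg r = 0).
Proof. unfold sg; destruct (Rlt_dec 0 r); [left; lra|]; destruct (Rlt_dec r 0); [right;left;lra|right;right;lra]. Qed.
Lemma sg_prod_le1 a b : sg a * sg b <= 1.
Proof. destruct (sg_cases a) as [[_ ->]|[[_ ->]|[_ ->]]]; destruct (sg_cases b) as [[_ ->]|[[_ ->]|[_ ->]]]; lra. Qed.
Lemma sg_prod_lt1 a b : sg a * sg b <> 1 -> sg a * sg b <= 0.
Proof. destruct (sg_cases a) as [[_ ->]|[[_ ->]|[_ ->]]]; destruct (sg_cases b) as [[_ ->]|[[_ ->]|[_ ->]]]; lra. Qed.
Lemma sg_prod_one a b : sg a * sg b = 1 -> sg a = sg b.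
Proof. destruct (sg_cases a) as [[_ ->]|[[_ ->]|[_ ->]]]; destruct (sg_cases b) as [[_ ->]|[[_ ->]|[_ ->]]]; lra. Qed.


Definition clamp (a b t : R) := Rmax a (Rmin b t).
Lemma clamp_in a b t : a <= b -> a <= clamp a b t <= b.
Proof. unfold clamp, Rmax, Rmin; intros; repeat destruct Rle_dec; lra. Qed.
Lemma clamp_lip a b s t : a <= b -> Rabs (clamp a b s - clamp a b t) <= Rabs (s - t).
Proof. unfold clamp, Rmax, Rmin; intros; unfold Rabs; repeat destruct Rle_dec; repeat destruct Rcase_abs; lra. Qed.
Lemma clamp_id a b t : a <= t <= b -> clamp a b t = t.
Proof. unfold clamp, Rmax, Rmin; intros; repeat destruct Rle_dec; lra. Qed.

Lemma loc_const_cont (f : R -> R) t : (exists d, d > 0 /\ forall s, Rabs (s - t) < d -> f s = f t) -> continuity_pt f t.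
Proof. intros [d [Hd H]]. unfold continuity_pt, continue_in, limit1_in, limit_in. intros eps Heps.
  exists d. split; auto. intros x [_ Hx]. simpl in *. unfold R_dist in *. rewrite H by auto.
  rewrite Rminus_diag, Rabs_R0. auto. Qed.

Lemma loc_const_ends (phi : R -> R) a b : a <= b ->
  (forall t, a <= t <= b -> exists d, d > 0 /\ forall s, a <= s <= b -> Rabs (s - t) < d -> phi s = phi t) ->
  phi a = phi b.
Proof. intros Hab H. destruct (Req_dec a b) as [->|Hab']; auto.
  destruct (Req_EM_T (phi b) (phi a)) as [E|E]; auto.
  set (chi := fun t => (if Req_EM_T (phi (clamp a b t)) (phi a) then 0 else 1) - /2).
  assert (Hc : continuity chi).
  { intros t. apply loc_const_cont. destruct (H (clamp a b t) (clamp_in a b t Hab)) as [d [Hd Hd']].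
    exists d; split; auto. intros s Hs. unfold chi. rewrite (Hd' (clamp a b s)).
    reflexivity. apply clamp_in; auto. eapply Rle_lt_trans. apply clamp_lip; auto. auto. }
  destruct (IVT chi a b Hc) as [z [_ Hz]]. lra.
  unfold chi. rewrite clamp_id by lra. destruct Req_EM_T; [lra| congruence].
  unfold chi. rewrite clamp_id by lra. destruct Req_EM_T; [congruence| lra].
  unfold chi in Hz. destruct Req_EM_T; lra. Qed.

Lemma sign_keep (f : R -> R) t : continuity_pt f t -> f t <> 0 ->
  exists d, d > 0 /\ forall s, Rabs (s - t) < d -> f s * f t > 0.
Proof. intros Hc Hf. unfold continuity_pt, continue_in, limit1_in, limit_in in Hc.
  destruct (Hc (Rabs (f t))) as [d [Hd H]]. apply Rabs_pos_lt; auto.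
  exists d; split; auto. intros s Hs. destruct (Req_dec s t) as [->|Hst]. nra.
  assert (H1 := H s (conj (conj I (not_eq_sym Hst)) Hs)). simpl in H1. unfold R_dist in H1.
  revert H1. unfold Rabs; repeat destruct Rcase_abs; intros; nra. Qed.

Lemma fin_delta (Q : nat -> R -> Prop) t m :
  (forall k, (k < m)%nat -> exists d, d > 0 /\ forall s, Rabs (s - t) < d -> Q k s) ->
  exists d, d > 0 /\ forall s, Rabs (s - t) < d -> forall k, (k < m)%nat -> Q k s.
Proof. induction m; intros H. exists 1; split; [lra|]; intros; lia.
  destruct IHm as [d1 [Hd1 H1]]. intros; apply H; lia.
  destruct (H m (Nat.lt_succ_diag_r m)) as [d2 [Hd2 H2]].
  exists (Rmin d1 d2); split. apply Rmin_pos; auto.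
  intros s Hs k Hk. destruct (Nat.eq_dec k m). subst. apply H2. eapply Rlt_le_trans; eauto. apply Rmin_r.
  apply H1. eapply Rlt_le_trans; eauto. apply Rmin_l. lia. Qed.


Lemma Finv (N : nat) (a b : nat -> R) : (N >= 1)%nat ->
  (forall k, a (k + N)%nat = a k) -> (forall k, b (k + N)%nat = b k) ->
  (forall k, (k < N)%nat -> b k = a k \/
     (a k = 0 /\ a (k + (N - 1))%nat + a (S k) = 0 /\ b (S k) = a (S k))) ->
  rsum (fun k => b k * b (S k)) N = rsum (fun k => a k * a (S k)) N.
Proof. intros HN Ha Hb H.
  assert (E1 : rsum (fun k => a k * (b (S k) - a (S k))) N =
               rsum (fun k => a (k + (N - 1))%nat * (b k - a k)) N).
  { rewrite <- (rsum_rot1 (fun k => a (k + (N - 1))%nat * (b k - a k))). apply rsum_ext. intros k _. cbv beta. replace (S k + (N - 1))%nat with (k + N)%nat by lia.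
    rewrite Ha. auto. intros k. cbv beta. idtac. replace (k + N + (N - 1))%nat with ((k + (N - 1)) + N)%nat by lia.
    rewrite Ha, Ha, Hb. auto. }
  assert (E2 : rsum (fun k => b k * b (S k) - a k * a (S k)) N =
     rsum (fun k => (b k - a k) * a (S k)) N + rsum (fun k => a k * (b (S k) - a (S k))) N).
  { rewrite <- rsum_plus. apply rsum_ext. intros k Hk. destruct (H k Hk) as [e|[e1 [e2 e3]]].
    rewrite e; ring. rewrite e3; ring. }
  rewrite E1, <- rsum_plus in E2.
  assert (E3 : rsum (fun k => (b k - a k) * a (S k) + a (k + (N - 1))%nat * (b k - a k)) N = 0).
  { transitivity (rsum (fun _ => 0) N); [| rewrite rsum_const; ring].
    apply rsum_ext. intros k Hk. destruct (H k Hk) as [e|[e1 [e2 e3]]]. rewrite e; ring.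
    replace ((b k - a k) * a (S k) + a (k + (N - 1))%nat * (b k - a k)) with ((b k - a k) * (a (k + (N-1))%nat + a (S k))) by ring.
    rewrite e2; ring. }
  rewrite E3 in E2.
  assert (E4 : rsum (fun k => b k * b (S k) - a k * a (S k)) N = rsum (fun k => b k * b (S k)) N + rsum (fun k => - (a k * a (S k))) N).
  { rewrite <- rsum_plus. apply rsum_ext; intros; ring. }
  assert (E5 : forall f m, rsum (fun k => - f k) m = - rsum f m).
  { intros f m; induction m; simpl; [lra|]. rewrite IHm; lra. }
  rewrite E5 in E4. lra. Qed.

Lemma chain (s : nat -> R) (Hs : forall k, s k = 1 \/ s k = -1 \/ s k = 0) :
  forall len a, s a * s (a + len)%nat < 0 -> rsum (fun m => s (a + m)%nat * s (S (a + m))) len <= INR len - 1.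
Proof.
  assert (Hle : forall k, s k * s (S k) <= 1).
  { intros k. destruct (Hs k) as [ -> | [ -> | -> ] ]; destruct (Hs (S k)) as [ -> | [ -> | -> ] ]; lra. }
  induction len; intros a H. rewrite Nat.add_0_r in H. nra.
  rewrite rsum_shift1. rewrite S_INR. rewrite Nat.add_0_r.
  destruct (Req_dec (s a * s (S a)) 1) as [E|E].
  - assert (Ea : s a = s (S a)).
    { destruct (Hs a) as [e|[e|e]]; rewrite e in *; destruct (Hs (S a)) as [e'|[e'|e']]; rewrite e' in *; lra. }
    assert (IH := IHlen (S a)). rewrite <- Ea in IH.
    replace (S a + len)%nat with (a + S len)%nat in IH by lia.
    specialize (IH H).
    replace (rsum (fun k => s (a + S k)%nat * s (S (a + S k))) len) with (rsum (fun m => s (S a + m)%nat * s (S (S a + m))) len).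
    rewrite E. lra. apply rsum_ext; intros k _. replace (a + S k)%nat with (S a + k)%nat by lia. reflexivity.
  - assert (s a * s (S a) <= 0).
    { destruct (Hs a) as [e|[e|e]]; rewrite e in *; destruct (Hs (S a)) as [e'|[e'|e']]; rewrite e' in *; lra. }
    assert (rsum (fun k => s (a + S k)%nat * s (S (a + S k))) len <= rsum (fun _ => 1) len) by (apply rsum_le; intros; apply Hle).
    rewrite rsum_const in H1. lra. Qed.


Lemma alg4 (A B C D : pt) : det A C > 0 -> det C D > 0 ->
  det (psub D C) (psub (pscale (-1) A) C) > 0 ->
  det (psub B A) (psub (0,0) A) > 0 ->
  det (psub B A) (psub (pscale (-1) C) A) > 0 ->
  det (psub B A) (psub (pscale (-1) D) A) > 0 -> det A D > 0.
Proof.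
  destruct A as [a1 a2], B as [b1 b2], C as [c1 c2], D as [d1 d2].
  unfold det, psub, pscale; simpl. intros h1 h2 h3 h4 h5 h6.
  destruct (Rlt_le_dec 0 (a1 * d2 - a2 * d1)) as [|Hc]; [lra|exfalso].
  assert (E3 : (c1 * d2 - c2 * d1) * ((d1 - c1) * (-1 * a2 - c2) - (d2 - c2) * (-1 * a1 - c1)) = (c1 * d2 - c2 * d1) * ((c1 * d2 - c2 * d1) - (d1 * a2 - d2 * a1) - (a1 * c2 - a2 * c1))) by ring.
  assert (Hd : (c1 * d2 - c2 * d1) - (d1 * a2 - d2 * a1) - (a1 * c2 - a2 * c1) > 0).
  { assert (0 < (c1 * d2 - c2 * d1) * ((c1 * d2 - c2 * d1) - (d1 * a2 - d2 * a1) - (a1 * c2 - a2 * c1))) by (rewrite <- E3; apply Rmult_lt_0_compat; lra). nra. }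
  assert (E : (c1 * d2 - c2 * d1) * ((b1 - a1) * a2 - (b2 - a2) * a1) = (d1 * a2 - d2 * a1) * ((b1 - a1) * (-1 * c2) - (b2 - a2) * (-1 * c1)) + (a1 * c2 - a2 * c1) * ((b1 - a1) * (-1 * d2) - (b2 - a2) * (-1 * d1))) by ring.
  set (m := (b1 - a1) * a2 - (b2 - a2) * a1) in *.
  set (X5 := (b1 - a1) * (-1 * c2) - (b2 - a2) * (-1 * c1)) in *.
  set (X6 := (b1 - a1) * (-1 * d2) - (b2 - a2) * (-1 * d1)) in *.
  set (al := d1 * a2 - d2 * a1) in *. set (be := a1 * c2 - a2 * c1) in *. set (de := c1 * d2 - c2 * d1) in *.
  assert (Hal : 0 <= al) by (unfold al; lra).
  assert (hm : m < 0) by (unfold m; lra).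
  assert (h5' : X5 - m > 0) by (unfold X5, m; lra).
  assert (h6' : X6 - m > 0) by (unfold X6, m; lra).
  assert (0 <= al * (X5 - m)) by nra. assert (0 < be * (X6 - m)) by nra.
  assert (0 < (de - al - be) * (- m)) by nra.
  nra. Qed.

Lemma det_halve (A B : pt) : det (psub B A) (psub (pscale (-1) A) A) > 0 -> det (psub B A) (psub (0,0) A) > 0 /\ det A B > 0.
Proof. destruct A as [a1 a2], B as [b1 b2]; unfold det, psub, pscale; simpl; intros; split; nra. Qed.

Lemma convA n (X : nat -> pt) : (2 <= n)%nat -> (forall k, X (k + n)%nat = pscale (-1) (X k)) ->
  (forall k d, (2 <= d <= 2 * n - 1)%nat -> det (psub (X (S k)) (X k)) (psub (X (k + d)%nat) (X k)) > 0) ->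
  forall i d, (1 <= d <= n - 1)%nat -> det (X i) (X (i + d)%nat) > 0.
Proof. intros Hn Hs Hc.
  assert (H0 : forall k, det (psub (X (S k)) (X k)) (psub (0,0) (X k)) > 0 /\ det (X k) (X (S k)) > 0).
  { intros k. apply det_halve. rewrite <- Hs. apply Hc. lia. }
  intros i d Hd. induction d as [|d IH]. lia.
  destruct (Nat.eq_dec d 0) as [->|Hd0]. rewrite Nat.add_1_r. apply H0.
  assert (IH' := IH ltac:(lia)).
  replace (i + S d)%nat with (S (i + d)) by lia.
  apply (alg4 (X i) (X (S i)) (X (i + d)%nat) (X (S (i + d)))); auto.
  - apply H0.
  - rewrite <- Hs. replace (i + n)%nat with ((i + d) + (n - d))%nat by lia. apply Hc. lia.
  - apply H0.
  - rewrite <- Hs. replace (i + d + n)%nat with (i + (d + n))%nat by lia. apply Hc. lia.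
  - rewrite <- Hs. replace (S (i + d) + n)%nat with (i + (S d + n))%nat by lia. apply Hc. lia.
Qed.


Definition VV (X Y : pt) : pt := pscale (/ det X Y) (psub Y X).

Lemma Vcond_alg (A B C Dm Em : pt) : det A B > 0 -> det B C > 0 -> det Dm Em > 0 ->
  det (psub C B) (psub A B) > 0 -> det (psub Em Dm) (psub B Dm) > 0 ->
  det (psub (VV B C) (VV A B)) (psub (VV Dm Em) (VV A B)) > 0.
Proof.
  destruct A as [a1 a2], B as [b1 b2], C as [c1 c2], Dm as [d1 d2], Em as [e1 e2].
  unfold VV, det, psub, pscale; simpl. intros h1 h2 h3 h4 h5.
  assert (E : (/ (b1 * c2 - b2 * c1) * (c1 - b1) - / (a1 * b2 - a2 * b1) * (b1 - a1)) * (/ (d1 * e2 - d2 * e1) * (e2 - d2) - / (a1 * b2 - a2 * b1) * (b2 - a2)) -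
   (/ (b1 * c2 - b2 * c1) * (c2 - b2) - / (a1 * b2 - a2 * b1) * (b2 - a2)) * (/ (d1 * e2 - d2 * e1) * (e1 - d1) - / (a1 * b2 - a2 * b1) * (b1 - a1)) =
   ((c1 - b1) * (a2 - b2) - (c2 - b2) * (a1 - b1)) * ((e1 - d1) * (b2 - d2) - (e2 - d2) * (b1 - d1)) / ((a1 * b2 - a2 * b1) * (b1 * c2 - b2 * c1) * (d1 * e2 - d2 * e1))).
  { field. repeat split; lra. }
  rewrite E. apply Rdiv_lt_0_compat. nra. apply Rmult_lt_0_compat; [apply Rmult_lt_0_compat|]; lra. Qed.


Lemma vec_decomp (A B X : pt) : det A B = 1 -> det B X = 0 -> X = pscale (det A X) B.
Proof. destruct A as [a1 a2], B as [b1 b2], X as [x1 x2]; unfold det, pscale; simpl; intros h1 h2.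
  assert (I1 : x1 * (a1 * b2 - a2 * b1) - (a1 * x2 - a2 * x1) * b1 = - a1 * (b1 * x2 - b2 * x1)) by ring.
  assert (I2 : x2 * (a1 * b2 - a2 * b1) - (a1 * x2 - a2 * x1) * b2 = - a2 * (b1 * x2 - b2 * x1)) by ring.
  rewrite h1, h2 in *. f_equal; lra. Qed.

Lemma ziso_alg (w v u mj mk mk1 x : pt) (t L Lj : R) : psub x mk = pscale t v -> psub mk mj = pscale Lj w ->
  psub mk1 mk = pscale L v -> det w v > 0 -> det v u > 0 ->
  det w (psub x mj) * det u (psub x mk1) >= 0 -> segment mk mk1 x.
Proof.
  destruct w as [w1 w2], v as [v1 v2], u as [u1 u2], mj as [j1 j2], mk as [k1 k2], mk1 as [l1 l2], x as [x1 x2].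
  unfold psub, pscale, det, segment, padd; simpl. intros e1 e2 e3 h1 h2 h3.
  assert (X1 := f_equal fst e1). assert (X2 := f_equal snd e1). assert (Y1 := f_equal fst e2). assert (Y2 := f_equal snd e2).
  assert (Z1 := f_equal fst e3). assert (Z2 := f_equal snd e3). simpl in *.
  assert (E1 : w1 * (x2 - j2) - w2 * (x1 - j1) = t * (w1 * v2 - w2 * v1)).
  { replace (x2 - j2) with ((x2 - k2) + (k2 - j2)) by ring. replace (x1 - j1) with ((x1 - k1) + (k1 - j1)) by ring.
    rewrite X1, X2, Y1, Y2. ring. }
  assert (E2 : u1 * (x2 - l2) - u2 * (x1 - l1) = - (t - L) * (v1 * u2 - v2 * u1)).
  { replace (x2 - l2) with ((x2 - k2) - (l2 - k2)) by ring. replace (x1 - l1) with ((x1 - k1) - (l1 - k1)) by ring.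
    rewrite X1, X2, Z1, Z2. ring. }
  rewrite E1, E2 in h3.
  assert (Ht : t * (t - L) <= 0).
  { assert (0 < (w1 * v2 - w2 * v1) * (v1 * u2 - v2 * u1)) by (apply Rmult_lt_0_compat; lra).
    destruct (Rle_dec (t * (t - L)) 0); auto. exfalso.
    assert (0 < t * (t - L) * ((w1 * v2 - w2 * v1) * (v1 * u2 - v2 * u1))) by (apply Rmult_lt_0_compat; lra).
    nra. }
  destruct (Req_dec L 0) as [HL|HL].
  - subst L. assert (t = 0) by nra. subst t. exists 0. split. lra. f_equal; lra.
  - exists (t / L). assert (0 <= t / L <= 1).
    { assert (Et : t = (t / L) * L) by (field; auto). set (th := t / L) in *.
      rewrite Et in Ht. assert (HL2 : 0 < L * L) by (destruct (Rlt_le_dec 0 L); nra).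
      assert (th * (th - 1) * (L * L) <= 0) by nra.
      assert (th * (th - 1) <= 0).
      { destruct (Rle_dec (th * (th - 1)) 0); auto. assert (0 < th * (th - 1) * (L * L)) by (apply Rmult_lt_0_compat; lra). lra. }
      split; nra. }
    split; auto. f_equal.
    + replace x1 with (k1 + t * v1) by lra. replace l1 with (k1 + L * v1) by lra. field; auto.
    + replace x2 with (k2 + t * v2) by lra. replace l2 with (k2 + L * v2) by lra. field; auto.
Qed.


Lemma rsum_scal c f m : rsum (fun k => c * f k) m = c * rsum f m.
Proof. induction m; simpl; [ring|]. rewrite IHm; ring. Qed.

Lemma exist_pos (w f : nat -> R) (m k0 : nat) (eps : R) : (forall k, (k < m)%nat -> w k > 0) ->
  rsum (fun k => w k * f k) m = 0 -> (k0 < m)%nat -> eps * f k0 < 0 ->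
  exists k, (k < m)%nat /\ eps * f k > 0.
Proof. intros Hw Hs Hk0 He. destruct (Classical_Prop.classic (exists k, (k < m)%nat /\ eps * f k > 0)) as [H|H]; auto.
  exfalso. assert (G : forall k, (k < m)%nat -> 0 <= - eps * (w k * f k)).
  { intros k Hk. destruct (Rle_dec (eps * f k) 0). assert (w k > 0) by auto. nra. exfalso; apply H; exists k; split; auto; lra. }
  assert (T := rsum_ge_term (fun k => - eps * (w k * f k)) m k0 G Hk0). rewrite rsum_scal, Hs in T.
  assert (w k0 > 0) by auto. simpl in T. nra. Qed.

Lemma rsum_last g m : (m >= 1)%nat -> rsum g m = rsum g (m - 1) + g (m - 1)%nat.
Proof. destruct m. lia. intros _. simpl. replace (m - 0)%nat with m by lia. auto. Qed.
Lemma rsum_first g m : (m >= 1)%nat -> rsum g m = g 0%nat + rsum (fun k => g (S k)) (m - 1).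
Proof. destruct m. lia. intros _. rewrite rsum_shift1. replace (S m - 1)%nat with m by lia. auto. Qed.

Section Comb.
Variable n : nat.
Variable s : nat -> R.
Hypothesis Hn : (2 <= n)%nat.
Hypothesis Hs : forall k, s k = 1 \/ s k = -1 \/ s k = 0.
Hypothesis Hper : forall k, s (k + 2 * n)%nat = s k.
Hypothesis Hsym : forall k, s (k + n)%nat = - s k.

Let f := fun k => s k * s (S k).
Lemma fper : forall k, f (k + 2 * n)%nat = f k.
Proof. intros k. unfold f. replace (S (k + 2 * n)) with (S k + 2 * n)%nat by lia. rewrite !Hper. auto. Qed.

Lemma chunk p len : s p * s (p + len)%nat < 0 -> rsum (fun k => f (p + k)%nat) len <= INR len - 1.
Proof. intros H. unfold f. assert (Hc := chain s Hs len p H).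
  eapply Rle_trans; [|exact Hc]. right. apply rsum_ext. intros; auto. Qed.

Lemma split_at p a b : rsum (fun k => f (p + k)%nat) (a + b) = rsum (fun k => f (p + k)%nat) a + rsum (fun k => f ((p + a) + k)%nat) b.
Proof. rewrite rsum_split. f_equal. apply rsum_ext; intros; f_equal; lia. Qed.

Lemma alt6 p q r : (p < q)%nat -> (q < r)%nat -> (r < p + n)%nat -> s p * s q < 0 -> s q * s r < 0 ->
  rsum f (2 * n) <= INR (2 * n) - 6.
Proof. intros h1 h2 h3 e1 e2.
  rewrite <- (rsum_rot f (2 * n) fper p).
  set (A := (q - p)%nat). set (B := (r - q)%nat). set (C0 := (p + n - r)%nat).
  replace (2 * n)%nat with (A + (B + (C0 + (A + (B + C0)))))%nat by (unfold A, B, C0; lia).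
  rewrite !split_at.
  assert (Ep : (p + A = q)%nat) by (unfold A; lia).
  assert (Eq : (q + B = r)%nat) by (unfold B; lia).
  assert (Er : (r + C0 = p + n)%nat) by (unfold C0; lia).
  replace (p + A + B)%nat with r by lia. replace (p + A + (B + C0))%nat with (p + n)%nat by lia.
  replace (p + A + (B + (C0 + A)))%nat with (q + n)%nat by lia.
  replace (p + A + (B + (C0 + (A + B))))%nat with (r + n)%nat by lia.
  rewrite Ep.
  assert (sp : s p = 1 \/ s p = -1) by (destruct (Hs p) as [e|[e|e]]; rewrite e in *; lra).
  assert (sq : s q = - s p) by (destruct (Hs p) as [e|[e|e]]; destruct (Hs q) as [e'|[e'|e']]; rewrite e, e' in *; lra).
  assert (sr : s r = s p) by (destruct (Hs r) as [e|[e|e]]; rewrite sq, e in *; destruct sp as [e'|e']; rewrite e' in *; lra).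
  assert (c1 := chunk p A ltac:(rewrite Ep; auto)).
  assert (c2 := chunk q B ltac:(rewrite Eq; auto)).
  assert (c3 := chunk r C0 ltac:(rewrite Er, Hsym, sr; destruct sp as [e|e]; rewrite e; lra)).
  assert (c4 := chunk (p + n) A ltac:(replace (p + n + A)%nat with (q + n)%nat by lia; rewrite !Hsym; lra)).
  assert (c5 := chunk (q + n) B ltac:(replace (q + n + B)%nat with (r + n)%nat by lia; rewrite !Hsym; lra)).
  assert (c6 := chunk (r + n) C0 ltac:(replace (r + n + C0)%nat with (p + 2 * n)%nat by lia; rewrite Hper, Hsym, sr; destruct sp as [e|e]; rewrite e; lra)).
  rewrite !plus_INR. rewrite !Er. replace (p + n + A)%nat with (q + n)%nat by lia. replace (q + n + B)%nat with (r + n)%nat by lia. lra.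
Qed.


Lemma pattern j : (forall d, (d < n)%nat -> s (j + d)%nat = -1) -> (forall d, (n <= d < 2 * n)%nat -> s (j + d)%nat = 1) ->
  rsum f (2 * n) = INR (2 * n) - 4.
Proof. intros Hl Hr. rewrite <- (rsum_rot f (2 * n) fper j).
  replace (2 * n)%nat with (n + n)%nat by lia. rewrite split_at.
  rewrite !(rsum_last _ n) by lia.
  rewrite (rsum_ext (fun k => f (j + k)%nat) (fun _ => 1)), (rsum_ext (fun k => f (j + n + k)%nat) (fun _ => 1)).
  rewrite !rsum_const. unfold f.
  replace (S (j + (n - 1))) with (j + n)%nat by lia. replace (S (j + n + (n - 1))) with (j + 0 + 2 * n)%nat by lia.
  rewrite Hper. replace (j + n + (n - 1))%nat with (j + (n + (n - 1)))%nat by lia.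
  rewrite (Hl (n - 1)%nat), (Hr n), (Hl 0%nat), (Hr (n + (n - 1))%nat) by lia.
  rewrite plus_INR, minus_INR by lia. simpl. lra.
  - intros k Hk. unfold f. replace (S (j + n + k)) with (j + (n + S k))%nat by lia.
    replace (j + n + k)%nat with (j + (n + k))%nat by lia. rewrite !Hr by lia. lra.
  - intros k Hk. unfold f. replace (S (j + k)) with (j + S k)%nat by lia. rewrite !Hl by lia. lra.
Qed.
End Comb.


Lemma Nalg (Mi Mm Vi Vm Um z : pt) (L be th : R) : psub Mm Mi = pscale L Vi -> det Um Vi = 1 -> det Um Vm = 1 ->
  z = padd (pscale (1 - th) (padd Mm (pscale be Vi))) (pscale th (padd Mm (pscale be Vm))) ->
  det Vi (psub z Mi) = be * th * det Vi Vm /\ det Vm (psub z Mm) = - be * (1 - th) * det Vi Vm /\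
  det Um (psub z Mm) = be /\ (be = 0 -> z = Mm).
Proof. destruct Mi as [a1 a2], Mm as [b1 b2], Vi as [c1 c2], Vm as [d1 d2], Um as [u1 u2].
  unfold psub, pscale, padd, det; simpl. intros E h1 h2 ->. simpl.
  assert (X1 := f_equal fst E). assert (X2 := f_equal snd E). simpl in X1, X2.
  split; [|split; [|split]].
  - replace a1 with (b1 - L * c1) by lra. replace a2 with (b2 - L * c2) by lra. ring.
  - ring.
  - match goal with |- ?l = _ => transitivity (be * ((1 - th) * (u1 * c2 - u2 * c1) + th * (u1 * d2 - u2 * d1))) end.
    ring. rewrite h1, h2; ring.
  - intros ->. f_equal; ring.
Qed.

Lemma sg_opp r : sg (- r) = - sg r.
Proof. destruct (sg_cases r) as [[h ->]|[[h ->]|[h ->]]]. apply sg_neg; lra. rewrite sg_pos; lra. rewrite sg_zero; lra. Qed.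

Lemma sg_mul_neg a b : a * b < 0 -> sg a * sg b < 0.
Proof. intros H. destruct (sg_cases a) as [[h ->]|[[h ->]|[h ->]]]; destruct (sg_cases b) as [[h' ->]|[[h' ->]|[h' ->]]]; nra. Qed.

Lemma sg_vals r : sg r = 1 \/ sg r = -1 \/ sg r = 0.
Proof. destruct (sg_cases r) as [[h ->]|[[h ->]|[h ->]]]; auto. Qed.

Lemma seg_left (A B : pt) : segment A B A.
Proof. exists 0. split. lra. destruct A, B; unfold padd, pscale; simpl; f_equal; ring. Qed.

Lemma seg_eq (A y : pt) : segment A A y -> y = A.
Proof. intros [t [_ ->]]. destruct A; unfold padd, pscale; simpl; f_equal; ring. Qed.

Lemma padd_0 (x v : pt) : padd x (pscale 0 v) = x.
Proof. destruct x, v; unfold padd, pscale; simpl; f_equal; ring. Qed.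

Lemma path_lin (x v : pt) : is_path (fun t => padd x (pscale t v)).
Proof. destruct x as [x1 x2], v as [v1 v2]. unfold is_path, padd, pscale; simpl. split; intros t.
  apply (continuity_pt_plus (fun _ => x1) (fun t => t * v1)). apply continuity_pt_const; intros ? ?; auto.
  apply (continuity_pt_mult (fun t => t) (fun _ => v1)). apply derivable_continuous_pt, derivable_pt_id. apply continuity_pt_const; intros ? ?; auto.
  apply (continuity_pt_plus (fun _ => x2) (fun t => t * v2)). apply continuity_pt_const; intros ? ?; auto.
  apply (continuity_pt_mult (fun t => t) (fun _ => v2)). apply derivable_continuous_pt, derivable_pt_id. apply continuity_pt_const; intros ? ?; auto.
Qed.


Section Geo.
Variables (n : nat) (U P : nat -> pt) (c : R) (alpha : nat -> R).
Hypothesis H1 : (2 <= n)%nat.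
Hypothesis H2 : forall i, U (i + 2 * n)%nat = U i.
Hypothesis H4 : forall i j, (i < 2 * n)%nat -> (j < 2 * n)%nat -> j <> i ->
     j <> ((i + 1) mod (2 * n))%nat ->
     det (psub (U (S i)) (U i)) (psub (U j) (U i)) > 0.
Hypothesis H5 : forall i, U (i + n)%nat = pscale (-1) (U i).
Hypothesis H6 : 0 < c.
Hypothesis H7 : forall i, P (i + 2 * n)%nat = P i.
Hypothesis H8 : forall i j, det (psub (P (S i)) (P i)) (psub (P j) (P i)) >= 0.
Hypothesis H10 : forall i, exists a, 0 <= a /\ psub (P (S i)) (P i) = pscale a (Vdir U i).
Hypothesis H11 : forall i, psub (P i) (P (i + n)%nat) = pscale (2 * c) (U i).
Hypothesis H12 : forall i, psub (Mpt n P (S i)) (Mpt n P i) = pscale (alpha i) (psub (U (S i)) (U i)).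

Lemma Ucond : forall k d, (2 <= d <= 2 * n - 1)%nat ->
  det (psub (U (S k)) (U k)) (psub (U (k + d)%nat) (U k)) > 0.
Proof. intros k d Hd.
  assert (HN : (2 * n > 0)%nat) by lia.
  set (q := (k / (2 * n))%nat). set (r := (k mod (2 * n))%nat).
  assert (Hk : k = (q * (2 * n) + r)%nat) by (unfold q, r; rewrite Nat.mul_comm; apply Nat.div_mod_eq).
  assert (Hr : (r < 2 * n)%nat) by (apply Nat.mod_upper_bound; lia).
  assert (E0 : U k = U r) by (rewrite Hk; apply per_mult; auto).
  assert (E1 : U (S k) = U (S r)) by (rewrite Hk, <- Nat.add_succ_r; apply per_mult; auto).
  assert (E2 : U (k + d)%nat = U (r + d)%nat) by (rewrite Hk, <- Nat.add_assoc; apply per_mult; auto).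
  rewrite E0, E1, E2. clearbody q r. clear Hk E0 E1 E2.
  assert (Hm1 : (((r + 1) mod (2 * n) = r + 1 /\ r + 1 < 2 * n) \/ ((r + 1) mod (2 * n) = 0 /\ r + 1 = 2 * n))%nat).
  { destruct (Nat.lt_ge_cases (r + 1) (2 * n)). left. split; auto. apply Nat.mod_small; auto.
    right. assert (Heq : (r + 1 = 2 * n)%nat) by lia. rewrite Heq. split; auto. apply Nat.mod_same. lia. }
  destruct (Nat.lt_ge_cases (r + d) (2 * n)) as [Hlt|Hge].
  - apply H4; [lia|lia|lia|]. destruct Hm1 as [[E E']|[E E']]; rewrite E; clear E; lia.
  - replace (r + d)%nat with ((r + d - 2 * n) + 2 * n)%nat by lia. rewrite H2.
    apply H4; [lia|lia|lia|]. destruct Hm1 as [[E E']|[E E']]; rewrite E; clear E; lia.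
Qed.

Lemma dt_pos : forall k, det (U k) (U (S k)) > 0.
Proof. intros k. apply (det_halve (U k) (U (S k))). rewrite <- H5. apply Ucond. lia. Qed.

Lemma Uper : forall k, U (S (k + 2 * n)) = U (S k).
Proof. intros k. replace (S (k + 2 * n)) with (S k + 2 * n)%nat by lia. apply H2. Qed.

Lemma Vper : forall k, Vdir U (k + 2 * n) = Vdir U k.
Proof. intros k. unfold Vdir. rewrite Uper, H2. auto. Qed.

Lemma Vsym : forall k, Vdir U (k + n) = pscale (-1) (Vdir U k).
Proof. intros k. unfold Vdir. replace (S (k + n)) with (S k + n)%nat by lia. rewrite !H5.
  assert (Hd := dt_pos k).
  destruct (U k) as [a1 a2], (U (S k)) as [b1 b2]. unfold det, psub, pscale in *; simpl in *.
  f_equal; field; lra. Qed.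

Lemma Vcond : forall k d, (2 <= d <= 2 * n - 1)%nat ->
  det (psub (Vdir U (S k)) (Vdir U k)) (psub (Vdir U (k + d)%nat) (Vdir U k)) > 0.
Proof. intros k d Hd. unfold Vdir. change (S (S k)) with (S (S k)).
  apply (Vcond_alg (U k) (U (S k)) (U (S (S k))) (U (k + d)%nat) (U (S (k + d)))).
  apply dt_pos. apply dt_pos. apply dt_pos.
  - assert (Hc := Ucond (S k) (2 * n - 1) ltac:(lia)).
    replace (S k + (2 * n - 1))%nat with (k + 2 * n)%nat in Hc by lia. rewrite H2 in Hc. exact Hc.
  - assert (Hc := Ucond (k + d) (2 * n + 1 - d) ltac:(lia)).
    replace (k + d + (2 * n + 1 - d))%nat with (S k + 2 * n)%nat in Hc by lia. rewrite H2 in Hc. exact Hc.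
Qed.

Lemma Vpos : forall i d, (1 <= d <= n - 1)%nat -> det (Vdir U i) (Vdir U (i + d)%nat) > 0.
Proof. apply convA; auto. exact Vsym. exact Vcond. Qed.

Lemma Mper2 : forall k, Mpt n P (k + n) = Mpt n P k.
Proof. intros k. unfold Mpt. replace (k + n + n)%nat with (k + 2 * n)%nat by lia. rewrite H7.
  destruct (P k), (P (k + n)%nat). unfold padd, pscale; simpl. f_equal; ring. Qed.

Lemma Mper : forall k, Mpt n P (k + 2 * n) = Mpt n P k.
Proof. intros k. replace (k + 2 * n)%nat with (k + n + n)%nat by lia. rewrite !Mper2. auto. Qed.

Lemma MP : forall k, Mpt n P k = psub (P k) (pscale c (U k)).
Proof. intros k. assert (E := H11 k). unfold Mpt. destruct (P k), (P (k + n)%nat), (U k).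
  unfold psub, padd, pscale in *; simpl in *. injection E; intros. f_equal; lra. Qed.

Lemma Mstep : forall k, psub (Mpt n P (S k)) (Mpt n P k) = pscale (alpha k * det (U k) (U (S k))) (Vdir U k).
Proof. intros k. rewrite H12. assert (Hd := dt_pos k). unfold Vdir.
  destruct (U k), (U (S k)). unfold psub, pscale, det in *; simpl in *. f_equal; field; lra. Qed.

Lemma alpha_sym : forall k, alpha (k + n)%nat = - alpha k.
Proof. intros k. assert (E1 := H12 (k + n)). assert (E2 := H12 k).
  replace (S (k + n)) with (S k + n)%nat in E1 by lia. rewrite !Mper2 in E1. rewrite E1 in E2.
  rewrite !H5 in E2. assert (Hd := dt_pos k).
  destruct (U k) as [a1 a2], (U (S k)) as [b1 b2]. unfold psub, pscale, det in *; simpl in *.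
  assert (E3 := f_equal fst E2). assert (E4 := f_equal snd E2). simpl in E3, E4.
  assert (Z1 : (alpha (k + n)%nat + alpha k) * (b1 - a1) = 0) by lra.
  assert (Z2 : (alpha (k + n)%nat + alpha k) * (b2 - a2) = 0) by lra.
  assert (Z : (alpha (k + n)%nat + alpha k) * (a1 * b2 - a2 * b1) = 0).
  { replace ((alpha (k + n)%nat + alpha k) * (a1 * b2 - a2 * b1)) with (a1 * ((alpha (k + n)%nat + alpha k) * (b2 - a2)) - a2 * ((alpha (k + n)%nat + alpha k) * (b1 - a1))) by ring.
    rewrite Z1, Z2; ring. }
  apply Rmult_integral in Z. destruct Z; lra. Qed.

Definition hh (k : nat) (x : pt) : R := det (Vdir U k) (psub x (Mpt n P k)).

Lemma hper : forall k x, hh (k + 2 * n) x = hh k x.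
Proof. intros; unfold hh; rewrite Vper, Mper; auto. Qed.

Lemma hsym : forall k x, hh (k + n) x = - hh k x.
Proof. intros; unfold hh; rewrite Vsym, Mper2. destruct (Vdir U k), (Mpt n P k), x.
  unfold det, psub, pscale; simpl; ring. Qed.

Lemma detUV : forall k, det (U k) (Vdir U k) = 1.
Proof. intros k. assert (Hd := dt_pos k). unfold Vdir. destruct (U k), (U (S k)). unfold det, psub, pscale in *; simpl in *. field. lra. Qed.

Lemma M_polycurve : forall k x, segment (Mpt n P k) (Mpt n P (S k)) x -> polycurve (2 * n) (Mpt n P) x.
Proof. intros k x Hs. assert (HN : (2 * n > 0)%nat) by lia.
  set (q := (k / (2 * n))%nat). set (r := (k mod (2 * n))%nat).
  assert (Hk : k = (q * (2 * n) + r)%nat) by (unfold q, r; rewrite Nat.mul_comm; apply Nat.div_mod_eq).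
  assert (Hr : (r < 2 * n)%nat) by (apply Nat.mod_upper_bound; lia).
  exists r. split; auto. rewrite Hk in Hs. rewrite <- Nat.add_succ_r in Hs. rewrite !(per_mult _ _ Mper) in Hs. auto. Qed.

Lemma zero_iso : forall k x, hh k x = 0 -> ~ polycurve (2 * n) (Mpt n P) x ->
  hh (k + (2 * n - 1)) x * hh (S k) x < 0.
Proof. intros k x Hz Hnp. destruct (Rlt_le_dec (hh (k + (2 * n - 1)) x * hh (S k) x) 0) as [|Hc]; auto.
  exfalso. apply Hnp. apply (M_polycurve k).
  set (j := (k + (2 * n - 1))%nat) in *.
  assert (Hj : S j = (k + 2 * n)%nat) by (unfold j; lia).
  apply (ziso_alg (Vdir U j) (Vdir U k) (Vdir U (S k)) (Mpt n P j) (Mpt n P k) (Mpt n P (S k)) x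
     (det (U k) (psub x (Mpt n P k))) (alpha k * det (U k) (U (S k))) (alpha j * det (U j) (U (S j)))).
  - apply vec_decomp. apply detUV. exact Hz.
  - rewrite <- (Mper k). rewrite <- Hj. apply Mstep.
  - apply Mstep.
  - rewrite <- (Vper k). rewrite <- Hj. rewrite <- Nat.add_1_r. apply Vpos. lia.
  - rewrite <- Nat.add_1_r. apply Vpos. lia.
  - unfold hh in Hc. lra.
Qed.

Definition FF (x : pt) : R := rsum (fun k => sg (hh k x) * sg (hh (S k) x)) (2 * n).

Lemma hh_cont : forall g, is_path g -> forall k t, continuity_pt (fun s => hh k (g s)) t.
Proof. intros g [Hx Hy] k t. unfold hh, det, psub. destruct (Vdir U k) as [v1 v2], (Mpt n P k) as [m1 m2]. simpl.
  apply (continuity_pt_minus (fun s => v1 * (snd (g s) - m2)) (fun s => v2 * (fst (g s) - m1))).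
  apply (continuity_pt_mult (fun _ => v1) (fun s => snd (g s) - m2)). apply continuity_pt_const; intros ? ?; auto.
  apply (continuity_pt_minus (fun s => snd (g s)) (fun _ => m2)). apply Hy. apply continuity_pt_const; intros ? ?; auto.
  apply (continuity_pt_mult (fun _ => v2) (fun s => fst (g s) - m1)). apply continuity_pt_const; intros ? ?; auto.
  apply (continuity_pt_minus (fun s => fst (g s)) (fun _ => m1)). apply Hx. apply continuity_pt_const; intros ? ?; auto.
Qed.

Lemma hh_mod : forall k x, hh k x = hh (k mod (2 * n)) x.
Proof. intros k x. apply (per_mod (fun k => hh k x)). lia. intros; apply hper. Qed.

Lemma F_local : forall g, is_path g -> forall t, ~ polycurve (2 * n) (Mpt n P) (g t) ->
  exists d, d > 0 /\ forall s, Rabs (s - t) < d -> FF (g s) = FF (g t).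
Proof. intros g Hg t Hnp.
  destruct (fin_delta (fun k s => hh k (g t) <> 0 -> sg (hh k (g s)) = sg (hh k (g t))) t (2 * n)) as [d [Hd H]].
  { intros k Hk. destruct (Req_dec (hh k (g t)) 0) as [E|E].
    exists 1; split; [lra|]. intros; contradiction.
    destruct (sign_keep (fun s => hh k (g s)) t (hh_cont g Hg k t) E) as [d [Hd H]].
    exists d; split; auto. intros s Hs _. specialize (H s Hs). simpl in H.
    destruct (sg_cases (hh k (g s))) as [[? ->]|[[? ->]|[? ->]]]; destruct (sg_cases (hh k (g t))) as [[? ->]|[[? ->]|[? ->]]]; nra. }
  exists d; split; auto. intros s Hs.
  assert (Q : forall k, hh k (g t) <> 0 -> sg (hh k (g s)) = sg (hh k (g t))).
  { intros k. rewrite (hh_mod k (g s)), (hh_mod k (g t)). apply H; auto. apply Nat.mod_upper_bound; lia. }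
  unfold FF. apply (Finv (2 * n) (fun k => sg (hh k (g t))) (fun k => sg (hh k (g s)))).
  lia. intros; rewrite hper; auto. intros; rewrite hper; auto.
  intros k Hk. destruct (Req_dec (hh k (g t)) 0) as [E|E]; [right|left; apply Q; auto].
  assert (Z := zero_iso k (g t) E Hnp).
  split. apply sg_zero; auto. split.
  destruct (sg_cases (hh (k + (2 * n - 1)) (g t))) as [[? ->]|[[? ->]|[? ->]]]; destruct (sg_cases (hh (S k) (g t))) as [[? ->]|[[? ->]|[? ->]]]; nra.
  apply Q. intro E'. rewrite E' in Z. lra.
Qed.

Lemma F_path : forall g, is_path g -> (forall t, 0 <= t <= 1 -> ~ polycurve (2 * n) (Mpt n P) (g t)) ->
  forall t, 0 <= t <= 1 -> FF (g t) = FF (g 1).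
Proof. intros g Hg Hav t Ht. apply (loc_const_ends (fun s => FF (g s))). lra.
  intros u Hu. destruct (F_local g Hg u (Hav u ltac:(lra))) as [d [Hd H]]. exists d; split; auto. Qed.

Definition aa (m : nat) : R := alpha m * det (U m) (U (S m)).

Lemma aa_sym : forall m, aa (m + n) = - aa m.
Proof. intros m. unfold aa. rewrite alpha_sym. replace (S (m + n)) with (S m + n)%nat by lia. rewrite !H5.
  destruct (U m), (U (S m)); unfold det, pscale; simpl; ring. Qed.

Lemma beta_step : forall k, beta n U alpha k = beta n U alpha (S k) + aa k.
Proof. intros k. unfold beta. fold aa.
  change (fun k0 : nat => alpha (k + k0)%nat * det (U (k + k0)%nat) (U (S (k + k0)))) with (fun k0 => aa (k + k0)%nat).
  change (fun k0 : nat => alpha (S k + k0)%nat * det (U (S k + k0)%nat) (U (S (S k + k0)))) with (fun k0 => aa (S k + k0)%nat).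
  rewrite (rsum_last (fun k0 => aa (S k + k0)%nat) n) by lia. rewrite (rsum_first (fun k0 => aa (k + k0)%nat) n) by lia.
  rewrite Nat.add_0_r. replace (S k + (n - 1))%nat with (k + n)%nat by lia. rewrite aa_sym.
  rewrite (rsum_ext (fun k0 => aa (k + S k0)%nat) (fun k0 => aa (S k + k0)%nat)) by (intros; f_equal; lia). lra. Qed.

Lemma detUSV : forall k, det (U (S k)) (Vdir U k) = 1.
Proof. intros k. assert (Hd := dt_pos k). unfold Vdir. destruct (U k), (U (S k)). unfold det, psub, pscale in *; simpl in *. field. lra. Qed.

Lemma Npt_prev : forall k, Npt n U P alpha k = padd (Mpt n P (S k)) (pscale (beta n U alpha (S k)) (Vdir U k)).
Proof. intros k. unfold Npt. rewrite beta_step. assert (E := Mstep k). fold (aa k) in E.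
  destruct (Mpt n P k), (Mpt n P (S k)), (Vdir U k). unfold psub, padd, pscale in *; simpl in *.
  assert (X1 := f_equal fst E). assert (X2 := f_equal snd E). simpl in *. f_equal; lra. Qed.

Lemma ident_step : forall k z, det (U k) (U (S k)) * hh k z =
  det (U (S k)) (psub z (Mpt n P (S k))) - det (U k) (psub z (Mpt n P k)) + aa k.
Proof. intros k z. unfold hh, aa. assert (E := H12 k). assert (Hd := dt_pos k). unfold Vdir.
  destruct (Mpt n P k) as [m1 m2], (Mpt n P (S k)) as [l1 l2], (U k) as [a1 a2], (U (S k)) as [b1 b2], z as [z1 z2].
  unfold psub, pscale, det in *; simpl in *.
  assert (X1 := f_equal fst E). assert (X2 := f_equal snd E). simpl in *.
  replace l1 with (m1 + alpha k * (b1 - a1)) by lra. replace l2 with (m2 + alpha k * (b2 - a2)) by lra. field. lra. Qed.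

Lemma ident : forall m z p, rsum (fun k => det (U (m + k)%nat) (U (S (m + k))) * hh (m + k) z) p =
  det (U (m + p)%nat) (psub z (Mpt n P (m + p))) - det (U m) (psub z (Mpt n P m)) + rsum (fun k => aa (m + k)%nat) p.
Proof. intros m z p. induction p. simpl. rewrite Nat.add_0_r. ring.
  simpl. rewrite IHp, ident_step. replace (S (m + p)) with (m + S p)%nat by lia. ring. Qed.

Lemma ident_n : forall m z, rsum (fun k => det (U (m + k)%nat) (U (S (m + k))) * hh (m + k) z) n =
  2 * (beta n U alpha m - det (U m) (psub z (Mpt n P m))).
Proof. intros m z. rewrite ident. rewrite H5, Mper2. unfold beta. fold aa.
  change (fun k0 : nat => alpha (m + k0)%nat * det (U (m + k0)%nat) (U (S (m + k0)))) with (fun k0 => aa (m + k0)%nat).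
  destruct (U m), (Mpt n P m), z. unfold det, psub, pscale; simpl. field. Qed.

Lemma sgprops (z : pt) : (forall k, sg (hh k z) = 1 \/ sg (hh k z) = -1 \/ sg (hh k z) = 0) /\
  (forall k, sg (hh (k + 2 * n) z) = sg (hh k z)) /\ (forall k, sg (hh (k + n) z) = - sg (hh k z)).
Proof. split; [|split]; intros k. apply sg_vals. rewrite hper; auto. rewrite hsym, sg_opp; auto. Qed.

Lemma N_bound : forall z, polycurve (2 * n) (Npt n U P alpha) z -> ~ polycurve (2 * n) (Mpt n P) z ->
  FF z <= INR (2 * n) - 6.
Proof. intros z [i [_ [th [Hth Ez]]]] Hnp.
  rewrite (Npt_prev i) in Ez. unfold Npt in Ez.
  set (m := S i) in *.
  destruct (Nalg (Mpt n P i) (Mpt n P m) (Vdir U i) (Vdir U m) (U m) z (aa i) (beta n U alpha m) th) as [Ei [Em [Eu Eb]]].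
  { unfold m. rewrite Mstep. fold (aa i). auto. } { unfold m. apply detUSV. } { apply detUV. } { exact Ez. }
  set (be := beta n U alpha m) in *.
  assert (HD : det (Vdir U i) (Vdir U m) > 0) by (unfold m; rewrite <- Nat.add_1_r; apply Vpos; lia).
  set (D := det (Vdir U i) (Vdir U m)) in *.
  change (det (Vdir U i) (psub z (Mpt n P i))) with (hh i z) in Ei.
  change (det (Vdir U m) (psub z (Mpt n P m))) with (hh m z) in Em.
  assert (Hbe : be <> 0).
  { intro E0. apply Hnp. apply (M_polycurve m). rewrite (Eb E0). apply seg_left. }
  assert (Z : rsum (fun k => det (U (m + k)%nat) (U (S (m + k))) * hh (m + k) z) n = 0).
  { rewrite ident_n, Eu. unfold be. ring. }
  assert (Hw : forall k, (k < n)%nat -> det (U (m + k)%nat) (U (S (m + k))) > 0) by (intros; apply dt_pos).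
  assert (Hin : hh (m + (n - 1)) z = - hh i z) by (replace (m + (n - 1))%nat with (i + n)%nat by (unfold m; lia); apply hsym).
  destruct (sgprops z) as [S1 [S2 S3]].
  unfold FF.
  assert (Hbe2 : be * be > 0) by (destruct (Rlt_le_dec 0 be); nra).
  destruct (Req_dec th 0) as [T0|T0]; [|destruct (Req_dec th 1) as [T1|T1]].
  -
    subst th. assert (hi0 : hh i z = 0) by (rewrite Ei; ring).
    assert (Zi := zero_iso i z hi0 Hnp). fold m in Zi.
    destruct (exist_pos (fun k => det (U (m + k)%nat) (U (S (m + k)))) (fun k => hh (m + k) z) n 0 be Hw Z ltac:(lia)) as [k [Hk Hk']].
    { rewrite Nat.add_0_r. rewrite Em. nra. }
    cbv beta in Hk'.
    assert (k <> 0%nat) by (intro; subst k; rewrite Nat.add_0_r, Em in Hk'; nra).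
    assert (k <> n - 1)%nat by (intro; subst k; rewrite Hin, hi0 in Hk'; lra).
    assert (k <> n - 2)%nat.
    { intro; subst k. replace (m + (n - 2))%nat with (i + n - 1)%nat in Hk' by (unfold m; lia).
      replace (i + (2 * n - 1))%nat with ((i + n - 1) + n)%nat in Zi by lia. rewrite hsym, Em in Zi.
      assert (0 < be * be * D * hh (i + n - 1)%nat z * hh (i + n - 1)%nat z) by nra. nra. }
    apply (alt6 n (fun k => sg (hh k z)) H1 S1 S2 S3 (i + (2 * n - 1)) (m + 2 * n) (m + k + 2 * n)); try (unfold m; lia).
    + apply sg_mul_neg. rewrite hper. auto.
    + apply sg_mul_neg. rewrite !hper, Em. nra.
  -
    subst th. assert (hm0 : hh m z = 0) by (rewrite Em; ring).
    assert (Zm := zero_iso m z hm0 Hnp).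
    replace (m + (2 * n - 1))%nat with (i + 2 * n)%nat in Zm by (unfold m; lia). rewrite hper, Ei in Zm.
    destruct (exist_pos (fun k => det (U (m + k)%nat) (U (S (m + k))) * 1) (fun k => hh (m + k) z) n 1 be) as [k [Hk Hk']].
    { intros; rewrite Rmult_1_r; auto. }
    { rewrite <- Z. apply rsum_ext; intros; ring. } lia.
    { cbv beta. replace (m + 1)%nat with (S m) by lia. assert (0 < D * (be * be)) by (apply Rmult_lt_0_compat; lra). nra. }
    cbv beta in Hk'.
    assert (k <> 0%nat) by (intro; subst k; rewrite Nat.add_0_r, hm0 in Hk'; lra).
    assert (k <> 1%nat).
    { intro; subst k. replace (m + 1)%nat with (S m) in Hk' by lia. assert (0 < D * (be * be)) by (apply Rmult_lt_0_compat; lra). nra. }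
    assert (k <> n - 1)%nat by (intro; subst k; rewrite Hin, Ei in Hk'; nra).
    apply (alt6 n (fun k => sg (hh k z)) H1 S1 S2 S3 i (S m) (m + k)); try (unfold m; lia).
    + apply sg_mul_neg. rewrite Ei. nra.
    + apply sg_mul_neg. assert (Q : be * hh (S m) z < 0).
      { assert (0 < D * (be * be)) by (apply Rmult_lt_0_compat; lra). nra. }
      assert (0 < be * be * - (hh (S m) z * hh (m + k)%nat z)) by nra. nra.
  -
    assert (Hth' : 0 < th < 1) by lra.
    destruct (exist_pos (fun k => det (U (m + k)%nat) (U (S (m + k)))) (fun k => hh (m + k) z) n 0 be Hw Z ltac:(lia)) as [k [Hk Hk']].
    { rewrite Nat.add_0_r. rewrite Em. assert (0 < be * be * ((1 - th) * D)) by (apply Rmult_lt_0_compat; [lra| apply Rmult_lt_0_compat; lra]). nra. }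
    cbv beta in Hk'.
    assert (k <> 0%nat).
    { intro; subst k. rewrite Nat.add_0_r, Em in Hk'. assert (0 < be * be * ((1 - th) * D)) by (apply Rmult_lt_0_compat; [lra| apply Rmult_lt_0_compat; lra]). nra. }
    assert (k <> n - 1)%nat.
    { intro; subst k. rewrite Hin, Ei in Hk'. assert (0 < be * be * (th * D)) by (apply Rmult_lt_0_compat; [lra| apply Rmult_lt_0_compat; lra]). nra. }
    apply (alt6 n (fun k => sg (hh k z)) H1 S1 S2 S3 i m (m + k)); try (unfold m; lia).
    + apply sg_mul_neg. rewrite Ei, Em. assert (0 < be * be * (th * (1 - th) * (D * D))) by (apply Rmult_lt_0_compat; [lra| repeat apply Rmult_lt_0_compat; lra]). nra.
    + apply sg_mul_neg. rewrite Em. assert (0 < (1 - th) * D) by (apply Rmult_lt_0_compat; lra). nra.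
Qed.

Lemma find_edge : forall y, polycurve (2 * n) P y -> exists j, segment (P j) (P (S j)) y /\ P (S j) <> P j.
Proof. intros y [i [_ Hs]].
  destruct (Classical_Prop.classic (exists j, segment (P j) (P (S j)) y /\ P (S j) <> P j)) as [H|H]; auto.
  exfalso. assert (Hy : y = P i).
  { destruct (Classical_Prop.classic (P (S i) = P i)) as [E|E]. rewrite E in Hs. apply seg_eq; auto.
    exfalso; apply H; exists i; auto. }
  assert (All : forall m, P (i + m)%nat = P i).
  { induction m. rewrite Nat.add_0_r; auto.
    destruct (Classical_Prop.classic (P (S (i + m)) = P (i + m)%nat)) as [E|E].
    replace (i + S m)%nat with (S (i + m)) by lia. rewrite E; auto.
    exfalso; apply H; exists (i + m)%nat; split; auto. rewrite IHm, <- Hy. apply seg_left. }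
  assert (E := H11 i). rewrite All in E. assert (Hd := dt_pos i).
  destruct (P i), (U i) as [u1 u2], (U (S i)) as [w1 w2]. unfold psub, pscale, det in *; simpl in *.
  assert (X1 := f_equal fst E). assert (X2 := f_equal snd E). simpl in *.
  assert (Z1 : c * u1 = 0) by lra. assert (Z2 : c * u2 = 0) by lra.
  apply Rmult_integral in Z1. apply Rmult_integral in Z2.
  destruct Z1 as [Z1|Z1]; [lra|]. destruct Z2 as [Z2|Z2]; [lra|]. subst. lra. Qed.

Lemma hh_affine : forall k (A B : pt) th, hh k (padd (pscale (1 - th) A) (pscale th B)) = (1 - th) * hh k A + th * hh k B.
Proof. intros; unfold hh. destruct (Vdir U k), (Mpt n P k), A, B; unfold det, psub, padd, pscale; simpl; ring. Qed.

Lemma hh_shift : forall k x t v, hh k (padd x (pscale t v)) = hh k x + t * det (Vdir U k) v.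
Proof. intros; unfold hh. destruct (Vdir U k), (Mpt n P k), x, v; unfold det, psub, padd, pscale; simpl; ring. Qed.

Lemma hh_M : forall k j, hh j (Mpt n P k) = / 2 * (hh j (P k) + hh j (P (k + n)%nat)).
Proof. intros; unfold hh, Mpt. destruct (Vdir U j), (Mpt n P j), (P k), (P (k + n)%nat); unfold det, psub, padd, pscale; simpl; field. Qed.

Lemma hh_Pj : forall j x, hh j x = det (Vdir U j) (psub x (P j)) - c.
Proof. intros; unfold hh. rewrite MP. assert (E := detUV j).
  destruct (Vdir U j), (P j), (U j), x; unfold det, psub, pscale in *; simpl in *. nra. Qed.

Lemma boundary : forall y, polycurve (2 * n) P y -> ~ polycurve (2 * n) (Mpt n P) y -> FF y = INR (2 * n) - 4.
Proof. intros y Hy Hny. destruct (find_edge y Hy) as [j [Hs Hne]].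
  destruct (H10 j) as [a [Ha Ea]].
  assert (Ha' : a > 0).
  { destruct (Req_dec a 0) as [E|E]; [|lra]. exfalso. apply Hne. subst a.
    destruct (P (S j)), (P j), (Vdir U j). unfold psub, pscale in *; simpl in *.
    assert (X1 := f_equal fst Ea). assert (X2 := f_equal snd Ea). simpl in *. f_equal; lra. }
  assert (HP : forall m, hh j (P m) >= - c).
  { intros m. rewrite hh_Pj. assert (E := H8 j m). rewrite Ea in E.
    assert (E' : det (pscale a (Vdir U j)) (psub (P m) (P j)) = a * det (Vdir U j) (psub (P m) (P j)))
      by (destruct (Vdir U j), (psub (P m) (P j)); unfold det, pscale; simpl; ring).
    rewrite E' in E. assert (0 <= det (Vdir U j) (psub (P m) (P j))).
    { destruct (Rle_dec 0 (det (Vdir U j) (psub (P m) (P j)))); auto. nra. } lra. }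
  assert (HM : forall w, polycurve (2 * n) (Mpt n P) w -> hh j w >= - c).
  { intros w [k [_ [th [Hth ->]]]]. rewrite hh_affine, !hh_M.
    assert (A1 := HP k). assert (A2 := HP (k + n)%nat). assert (A3 := HP (S k)). assert (A4 := HP (S k + n)%nat). nra. }
  assert (Hyc : hh j y = - c).
  { destruct Hs as [th [Hth ->]]. rewrite hh_affine, !hh_Pj.
    assert (E1 : psub (P (S j)) (P j) = pscale a (Vdir U j)) by exact Ea.
    rewrite E1. replace (psub (P j) (P j)) with (0, 0) by (destruct (P j); unfold psub; simpl; f_equal; ring).
    destruct (Vdir U j); unfold det, pscale; simpl; ring. }
  assert (HUj : det (Vdir U j) (U j) = -1) by (assert (E := detUV j); destruct (Vdir U j), (U j); unfold det in *; simpl in *; lra).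
  set (y1 := padd y (pscale 1 (U j))).
  assert (F1 : FF y = FF y1).
  { assert (Hp := F_path (fun t => padd y (pscale t (U j))) (path_lin y (U j))).
    simpl in Hp. rewrite <- (padd_0 y (U j)) at 1. apply Hp; [|lra].
    intros t Ht Hc. destruct (Req_dec t 0) as [->|Ht0]. rewrite padd_0 in Hc. auto.
    apply HM in Hc. rewrite hh_shift, HUj in Hc. lra. }
  assert (Hy1 : hh j y1 = - c - 1) by (unfold y1; rewrite hh_shift, HUj; lra).
  set (R0 := rsum (fun d => (Rabs (hh (j + S d) y1) + 1) / det (Vdir U j) (Vdir U (j + S d)%nat)) (n - 1)).
  set (y2 := padd y1 (pscale 1 (pscale R0 (Vdir U j)))).
  assert (F2 : FF y1 = FF y2).
  { assert (Hp := F_path (fun t => padd y1 (pscale t (pscale R0 (Vdir U j)))) (path_lin y1 _)).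
    simpl in Hp. rewrite <- (padd_0 y1 (pscale R0 (Vdir U j))) at 1. apply Hp; [|lra].
    intros t Ht Hc. apply HM in Hc. rewrite hh_shift in Hc.
    replace (det (Vdir U j) (pscale R0 (Vdir U j))) with 0 in Hc by (destruct (Vdir U j); unfold det, pscale; simpl; ring). lra. }
  rewrite F1, F2. unfold FF.
  destruct (sgprops y2) as [S1 [S2 S3]].
  assert (Neg : forall d, (d < n)%nat -> hh (j + d) y2 < 0).
  { intros d Hd. unfold y2. rewrite hh_shift.
    replace (det (Vdir U (j + d)) (pscale R0 (Vdir U j))) with (- R0 * det (Vdir U j) (Vdir U (j + d)%nat))
      by (destruct (Vdir U j), (Vdir U (j + d)%nat); unfold det, pscale; simpl; ring).
    destruct d as [|d]. rewrite Nat.add_0_r, Hy1. replace (det (Vdir U j) (Vdir U j)) with 0 by (destruct (Vdir U j); unfold det; simpl; ring). lra.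
    assert (HD : det (Vdir U j) (Vdir U (j + S d)%nat) > 0) by (apply Vpos; lia).
    assert (Hterm : (Rabs (hh (j + S d) y1) + 1) / det (Vdir U j) (Vdir U (j + S d)%nat) <= R0).
    { apply (rsum_ge_term (fun d => (Rabs (hh (j + S d) y1) + 1) / det (Vdir U j) (Vdir U (j + S d)%nat)) (n - 1) d).
      intros k Hk. assert (det (Vdir U j) (Vdir U (j + S k)%nat) > 0) by (apply Vpos; lia).
      apply Rlt_le, Rdiv_lt_0_compat; [assert (0 <= Rabs (hh (j + S k) y1)) by apply Rabs_pos; lra | lra]. lia. }
    apply (Rmult_le_compat_r (det (Vdir U j) (Vdir U (j + S d)%nat))) in Hterm; [|lra].
    unfold Rdiv in Hterm. rewrite Rmult_assoc, Rinv_l in Hterm by lra.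
    assert (hh (j + S d) y1 <= Rabs (hh (j + S d) y1)) by apply Rle_abs. lra. }
  apply (pattern n (fun k => sg (hh k y2)) H1 S2 j).
  - intros d Hd. apply sg_neg. apply Neg; auto.
  - intros d Hd. replace (j + d)%nat with ((j + (d - n)) + n)%nat by lia. rewrite hsym. apply sg_pos.
    assert (hh (j + (d - n)) y2 < 0) by (apply Neg; lia). lra.
Qed.

Lemma main_sec : forall x : pt,
    (polycurve (2 * n) (Npt n U P alpha) x \/
     region (polycurve (2 * n) (Npt n U P alpha)) (polycurve (2 * n) P) x) ->
    region (polycurve (2 * n) (Mpt n P)) (polycurve (2 * n) P) x.
Proof. intros x Hx [g [Hg [H0 [HB Hav]]]].
  assert (Hall : forall t, 0 <= t <= 1 -> FF (g t) = INR (2 * n) - 4).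
  { intros t Ht. rewrite (F_path g Hg Hav t Ht). apply boundary; auto. apply Hav; lra. }
  assert (NoN : forall t, 0 <= t <= 1 -> ~ polycurve (2 * n) (Npt n U P alpha) (g t)).
  { intros t Ht HN. assert (B := N_bound (g t) HN (Hav t Ht)). rewrite Hall in B; auto. lra. }
  destruct Hx as [Hx|Hx].
  - apply (NoN 0). lra. rewrite H0; auto.
  - apply Hx. exists g. split; [auto|split;[auto|split;[auto|exact NoN]]].
Qed.

End Geo.

Theorem proposition4p3 (n : nat) (U P : nat -> pt) (c : R) (alpha : nat -> R) :
  (2 <= n)%nat ->
  (forall i, U (i + 2 * n)%nat = U i) ->
  (forall i j, (i < 2 * n)%nat -> (j < 2 * n)%nat -> i <> j -> U i <> U j) ->
  (forall i j, (i < 2 * n)%nat -> (j < 2 * n)%nat -> j <> i ->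
     j <> ((i + 1) mod (2 * n))%nat ->
     det (psub (U (S i)) (U i)) (psub (U j) (U i)) > 0) ->
  (forall i, U (i + n)%nat = pscale (-1) (U i)) ->
  0 < c ->
  (forall i, P (i + 2 * n)%nat = P i) ->
  (forall i j, det (psub (P (S i)) (P i)) (psub (P j) (P i)) >= 0) ->
  (exists y, forall i, P (S i) <> P i ->
     det (psub (P (S i)) (P i)) (psub y (P i)) > 0) ->
  (forall i, exists a, 0 <= a /\ psub (P (S i)) (P i) = pscale a (Vdir U i)) ->
  (forall i, psub (P i) (P (i + n)%nat) = pscale (2 * c) (U i)) ->
  (forall i, psub (Mpt n P (S i)) (Mpt n P i) = pscale (alpha i) (psub (U (S i)) (U i))) ->
  forall x : pt,
    (polycurve (2 * n) (Npt n U P alpha) x \/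
     region (polycurve (2 * n) (Npt n U P alpha)) (polycurve (2 * n) P) x) ->
    region (polycurve (2 * n) (Mpt n P)) (polycurve (2 * n) P) x.
Proof. intros h1 h2 h3 h4 h5 h6 h7 h8 h9 h10 h11 h12.
  apply (main_sec n U P c alpha); assumption. Qed.
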